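(* In the binary-input random coding setting described in the context, with message $1$ transmitted, for any $w'\neq1$ and any $\theta<0$, almost surely $$\lim_{N\to\infty}\frac1N\ln\mathbb E\big\{e^{N\theta\mathsf D(w')}\,\big|\,\underline{\mathsf T}\big\}=\mathbb E\Big[\ln\big(1+e^{\theta|\ln(q^+(\mathsf Y)/q^-(\mathsf Y))|}\big)\Big]-\ln2,$$ where on the right $\mathsf Y$ has density $(q^++q^-)/2$.
   Context: Let $q^+$ and $q^-$ be probability density functions on $\mathbb R$. They are the output densities of a binary-input memoryless channel when the input is $+1$ and $-1$, respectively. Assume: (A1) There exist $M_1>0$, $a>0$ and a polynomial $S_1$ with $q^\pm(y)<S_1(|y|)e^{-a|y|}$ for all $|y|>M_1$. (A2) There exist $M_2>0$ and a polynomial $S_2$ with $|\ln(q^+(y)/q^-(y))|<S_2(|y|)$ for all $|y|>M_2$. (A3) Let $\mathsf X$ be uniform on $\{+1,-1\}$, let $\mathsf Y$ have density $q^{+}$ given $\mathsf X=+1$ and $q^-$ given $\mathsf X=-1$, and let $\mathsf T=\ln(q^+(\mathsf Y)/q^-(\mathsf Y))$. The CDF $\Psi$ of $|\mathsf T|$ on $[0,\infty)$ and its inverse $\Psi^{-1}$ are smooth with finite first, second and third derivatives. Random coding: the codebook has $\lceil e^{NR}\rceil$ codewords $\underline{\mathsf X}(w)=(\mathsf X_1(w),\dots,\mathsf X_N(w))$, with all entries i.i.d. uniform on $\{\pm1\}$. Message $1$ is transmitted: given $\underline{\mathsf X}(1)$, the outputs $\mathsf Y_1,\dots,\mathsf Y_N$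 are independent, with $\mathsf Y_i$ having density $q^{\mathsf X_i(1)}$. Let $\mathsf T_i=\ln(q^+(\mathsf Y_i)/q^-(\mathsf Y_i))$ and $\underline{\mathsf T}=(\mathsf T_1,\dots,\mathsf T_N)$. Let $\mathsf R_i$ be the rank of $|\mathsf T_i|$ among $|\mathsf T_1|,\dots,|\mathsf T_N|$ (rank $1$ is the smallest). Let $\mathrm{sgn}(t)=1$ if $t\ge0$ and $-1$ otherwise. The CDF-ORBGRAND metric is $$\mathsf D(w)=\frac1N\sum_{i=1}^N\Psi^{-1}\Big(\frac{\mathsf R_i}{N+1}\Big)\mathbf 1\big(\mathrm{sgn}(\mathsf T_i)\mathsf X_i(w)<0\big).$$ *)

(* Defs.v *)
From HB Require Import structures.
From mathcomp Require Import all_boot all_order all_algebra.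
From mathcomp Require Import all_classical all_reals all_analysis.
Set Implicit Arguments. Unset Strict Implicit. Unset Printing Implicit Defensive.
Import Order.TTheory GRing.Theory Num.Theory.
Import numFieldNormedType.Exports.
Local Open Scope classical_set_scope.
Local Open Scope ring_scope.

Section Defs.
Variable R : realType.

Definition sval (b : bool) : R := if b then 1 else -1.

Definition qof (qp qm : R -> R) (b : bool) : R -> R := if b then qp else qm.

Definition llr (qp qm : R -> R) (y : R) : R := ln (qp y / qm y).

Definition sgn (t : R) : R := if 0 <= t then 1 else -1.

Definition is_pdf (q : R -> R) : Prop :=
  measurable_fun setT q /\ (forall y, 0 <= q y) /\
  (\int[lebesgue_measure]_(y in setT) (q y)%:E = 1)%E.

(* CDF of |T| with (X,Y) as in (A3): Y has density (q^+ + q^-)/2. *)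
Definition PsiCDF (qp qm : R -> R) (t : R) : R :=
  fine (\int[lebesgue_measure]_(y in [set y | (`|llr qp qm y| <= t)%R])
          ((qp y + qm y) / 2)%R%:E)%E.

(* rank of |T_i| among |T_1|,...,|T_N| (1 = smallest); ties broken by index *)
Definition rank (N : nat) (t : 'I_N -> R) (i : 'I_N) : nat :=
  #|[set j : 'I_N | (`|t j| < `|t i|) || ((`|t j| == `|t i|) && (j <= i)%N)]|.

Definition Dmetric (Psiinv : R -> R) (N : nat) (t : 'I_N -> R)
    (x : {ffun 'I_N -> bool}) : R :=
  N%:R^-1 * \sum_(i < N)
     Psiinv ((rank t i)%:R / (N.+1)%:R) * (if sgn (t i) * sval (x i) < 0 then 1 else 0).

(* E{ e^{N theta D(w')} | T = t }: the codeword X(w'), w' <> 1, is uniform on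
   {+-1}^N and independent of T, so the conditional expectation is the average
   over all 2^N codewords. *)
Definition condMGF (Psiinv : R -> R) (theta : R) (N : nat) (t : 'I_N -> R) : R :=
  (2 ^+ N)^-1 * \sum_(x : {ffun 'I_N -> bool}) expR (N%:R * theta * Dmetric Psiinv t x).

End Defs.

(* Main.v *)
Require Import Defs.
From HB Require Import structures.
From mathcomp Require Import all_boot all_order all_algebra.
From mathcomp Require Import all_classical all_reals all_analysis.
From mathcomp Require Import measurable_realfun.
From mathcomp Require Import ring lra zify.
Import Order.TTheory GRing.Theory Num.Theory.
Import numFieldNormedType.Exports.
Local Open Scope classical_set_scope.
Local Open Scope ring_scope.
Set Implicit Arguments. Unset Strict Implicit.

Section Meas.
Variable R : realType.

Lemma inv_meas : measurable_fun setT (@GRing.inv R).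
Proof.
have -> : [set: R] = [set 0] `|` ~` [set 0] by rewrite setUv.
apply/measurable_funU => //; first exact: measurableC.
split.
  have h : {in [set (0:R)], (fun _ : R => (0:R)) =1 GRing.inv}.
    by move=> x; rewrite inE /= => ->; rewrite invr0.
  apply: eq_measurable_fun h _; exact: measurable_cst.
apply: measurable_realfun.open_continuous_measurable_fun.
  rewrite openC; exact: closed_eq.
move=> x; rewrite inE /= => /eqP x0; exact: inv_continuous.
Qed.

End Meas.

Section J.
Variable R : realType.
Variables qp qm : R -> R.
Hypothesis pp : is_pdf qp.
Hypothesis pm : is_pdf qm.

Definition fden (y : R) := (qp y + qm y) / 2.
Definition Tf (y : R) := `|llr qp qm y|.
Definition J (phi : R -> R) :=
  Rintegral (@lebesgue_measure R) setT (fun y => phi (Tf y) * fden y).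
Definition good (phi : R -> R) :=
  measurable_fun setT phi /\ exists C, forall s, 0 <= s -> `|phi s| <= C.

Lemma pdf_int q : is_pdf q -> (@lebesgue_measure R).-integrable setT (EFin \o q).
Proof.
case=> mq [q0 q1]; apply/integrableP; split; first exact/measurable_realfun.measurable_EFinP.
have -> : (fun x => `|(EFin \o q) x|%E) = (fun x => (q x)%:E).
  by apply: funext => y /=; rewrite ger0_norm.
by rewrite q1 ltry.
Qed.

Lemma Rint_pdf q : is_pdf q -> Rintegral (@lebesgue_measure R) setT q = 1.
Proof. by case=> _ [_ q1]; rewrite /Rintegral q1. Qed.

Lemma fden_ge0 y : 0 <= fden y.
Proof.
case: pp => _ [p0 _]; case: pm => _ [m0 _].
by rewrite /fden divr_ge0 // addr_ge0.
Qed.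

Lemma fden_int : (@lebesgue_measure R).-integrable setT (EFin \o fden).
Proof.
have := integrableZl measurableT (2^-1)
  (integrableD measurableT (pdf_int pp) (pdf_int pm)).
apply: eq_integrable => // y _ /=.
by rewrite /fden mulrC EFinM.
Qed.

Lemma Tf_meas : measurable_fun setT Tf.
Proof.
case: pp => mp _; case: pm => mm _.
apply: measurableT_comp => //.
apply: measurableT_comp; first exact: measurable_realfun.measurable_ln.
apply: measurable_realfun.measurable_funM => //.
apply: measurableT_comp => //; exact: inv_meas.
Qed.

Lemma good_int phi : good phi ->
  (@lebesgue_measure R).-integrable setT (EFin \o (fun y => phi (Tf y) * fden y)).
Proof.
case=> mphi [C hC].
have hb : [bounded (phi \o Tf) y | y in setT].
  exists C; split; first by rewrite num_real.
  move=> M CM y _ /=; apply: le_trans (hC _ (normr_ge0 _)) (ltW CM).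
have := integrableMl measurableT fden_int (measurableT_comp mphi Tf_meas) hb.
apply: eq_integrable => // y _ /=.
by rewrite mulrC EFinM.
Qed.

Lemma J_ext a b : (forall s, a s = b s) -> J a = J b.
Proof. by move=> h; congr J; apply: funext. Qed.

Lemma J_add a b : good a -> good b -> J (fun s => a s + b s) = J a + J b.
Proof.
move=> ga gb; rewrite /J -RintegralD //; try exact: good_int.
by apply: eq_Rintegral => y _; rewrite mulrDl.
Qed.

Lemma J_scale c a : good a -> J (fun s => c * a s) = c * J a.
Proof.
move=> ga; rewrite /J -RintegralZl //; last exact: good_int.
by apply: eq_Rintegral => y _; rewrite mulrA.
Qed.

Lemma J_le a b : good a -> good b -> (forall s, 0 <= s -> a s <= b s) ->
  J a <= J b.
Proof.
move=> ga gb hab; rewrite /J; apply: le_Rintegral => //; try exact: good_int.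
move=> y _; apply: ler_wpM2r; first exact: fden_ge0.
exact: hab (normr_ge0 _).
Qed.

Lemma J_ind t : J (fun s => if s <= t then 1 else 0) = PsiCDF qp qm t.
Proof.
change (PsiCDF qp qm t) with
  (Rintegral (@lebesgue_measure R) [set y | `|llr qp qm y| <= t] fden).
rewrite Rintegral_mkcond /J; apply: eq_Rintegral => y _.
rewrite patchE /Tf; case: ifPn => h.
  by rewrite mem_set // mul1r.
by rewrite memNset ?mul0r //= => h2; move: h; rewrite h2.
Qed.

Lemma J_one : J (fun _ => 1) = 1.
Proof.
have -> : J (fun _ => 1) =
    Rintegral (@lebesgue_measure R) setT (fun y => 2^-1 * (qp y + qm y)).
  by apply: eq_Rintegral => y _; rewrite mul1r /fden mulrC.
rewrite RintegralZl //; last exact: (integrableD measurableT (pdf_int pp) (pdf_int pm)).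
rewrite RintegralD //; try exact: pdf_int.
by rewrite !Rint_pdf // mulVf.
Qed.

End J.

Section G.
Variable R : realType.

Definition gf (th s : R) := ln (1 + expR (th * s)).

Lemma gf_ge0 th s : 0 <= gf th s.
Proof. by apply: ln_ge0; rewrite lerDl ltW // expR_gt0. Qed.

Lemma gf_anti th s1 s2 : th <= 0 -> s1 <= s2 -> gf th s2 <= gf th s1.
Proof.
move=> th0 s12; rewrite /gf ler_ln ?posrE ?addr_gt0 ?expR_gt0 //.
by rewrite lerD2l ler_expR ler_wnM2l.
Qed.

Lemma gf_le_ln2 th s : th <= 0 -> 0 <= s -> gf th s <= ln 2.
Proof.
move=> th0 s0; rewrite /gf ler_ln ?posrE ?addr_gt0 ?expR_gt0 //.
by rewrite -[2]/(1 + 1) lerD2l expR_le1 mulr_le0_ge0.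
Qed.

Variables qp qm : R -> R.

Lemma good_ext (a b : R -> R) : (forall s, a s = b s) -> good a -> good b.
Proof. by move=> h; rewrite (_ : a = b) //; apply: funext. Qed.

Lemma good_cst (c : R) : good (fun _ : R => c).
Proof. by split; [exact: measurable_cst | exists `|c|]. Qed.

Lemma good_ind t : good (fun s : R => if s <= t then 1 else 0).
Proof.
split.
  apply: measurable_fun_ifT; try exact: measurable_cst.
  by apply: measurable_fun_ler => //; exact: measurable_cst.
by exists 1 => s _; case: ifP => _; rewrite ?normr1 ?normr0.
Qed.

Lemma good_add (a b : R -> R) : good a -> good b -> good (fun s : R => a s + b s).
Proof.
move=> [ma [Ca hCa]] [mb [Cb hCb]]; split; first exact: measurable_funD.
exists (Ca + Cb) => s s0; apply: le_trans (ler_normD _ _) _.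
by apply: lerD; [exact: hCa | exact: hCb].
Qed.

Lemma good_scale (c : R) (a : R -> R) : good a -> good (fun s : R => c * a s).
Proof.
move=> [ma [Ca hCa]]; split.
  by apply: measurable_realfun.measurable_funM => //; exact: measurable_cst.
exists (`|c| * Ca) => s s0; rewrite normrM; apply: ler_wpM2l => //.
exact: hCa.
Qed.

Lemma good_sum n (F : nat -> R -> R) : (forall k, good (F k)) ->
  good (fun s => \sum_(k < n) F k s).
Proof.
move=> gF; elim: n => [|n IH].
  by apply: good_ext (good_cst 0) => s; rewrite big_ord0.
apply: good_ext (good_add IH (gF n)) => s; by rewrite big_ord_recr.
Qed.

Lemma good_gf th : th <= 0 -> good (gf th).
Proof.
move=> th0; split.
  apply: measurableT_comp; first exact: measurable_realfun.measurable_ln.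
  apply: measurable_funD; first exact: measurable_cst.
  apply: measurableT_comp; first exact: measurable_realfun.measurable_expR.
  exact: measurable_realfun.mulrl_measurable.
exists (ln 2) => s s0; rewrite ger0_norm ?gf_ge0 //; exact: gf_le_ln2.
Qed.

Hypothesis pp : is_pdf qp.
Hypothesis pm : is_pdf qm.

Lemma J_sum n (F : nat -> R -> R) : (forall k, good (F k)) ->
  J qp qm (fun s => \sum_(k < n) F k s) = \sum_(k < n) J qp qm (F k).
Proof.
move=> gF; elim: n => [|n IH].
  rewrite big_ord0 (@J_ext _ qp qm _ (fun s => 0 * 1)); last by move=> s; rewrite big_ord0 mul0r.
  by rewrite J_scale ?mul0r //; exact: good_cst.
rewrite (@J_ext _ qp qm _ (fun s => \sum_(k < n) F k s + F n s)); last first.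
  by move=> s; rewrite big_ord_recr.
by rewrite J_add // ?IH ?big_ord_recr //; exact: good_sum.
Qed.

End G.

Section Core.
Variable R : realType.
Variables qp qm Psiinv : R -> R.
Variable th : R.
Hypothesis pp : is_pdf qp.
Hypothesis pm : is_pdf qm.
Hypothesis Hinv : forall u, 0 <= u < 1 -> 0 <= Psiinv u /\ PsiCDF qp qm (Psiinv u) = u.
Hypothesis th0 : th <= 0.
Variable N : nat.

Definition tk (k : nat) := Psiinv (k%:R / N.+1%:R).
Definition Ind (k : nat) (s : R) : R := if s <= tk k then 1 else 0.

Lemma good_Ind k : good (Ind k).
Proof. exact: good_ind. Qed.

Lemma good_sub (a b : R -> R) : good a -> good b -> good (fun s => a s - b s).
Proof.
move=> ga gb; apply: good_ext (good_add ga (good_scale (-1) gb)) => s.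
by rewrite mulN1r.
Qed.

Lemma J_sub (a b : R -> R) : good a -> good b ->
  J qp qm (fun s => a s - b s) = J qp qm a - J qp qm b.
Proof.
move=> ga gb.
rewrite (@J_ext _ qp qm _ (fun s => a s + (-1) * b s)); last first.
  by move=> s; rewrite mulN1r.
by rewrite J_add ?J_scale ?mulN1r //; exact: good_scale.
Qed.

Lemma tk_ok k : (k <= N)%N -> 0 <= tk k /\ PsiCDF qp qm (tk k) = k%:R / N.+1%:R.
Proof.
move=> kN; apply: Hinv; rewrite divr_ge0 //=.
by rewrite ltr_pdivrMr ?ltr0Sn // mul1r ltr_nat ltnS.
Qed.

Lemma J_Ind k : (k <= N)%N -> J qp qm (Ind k) = k%:R / N.+1%:R.
Proof. by move=> kN; rewrite /Ind J_ind //; case: (tk_ok kN). Qed.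

Lemma tk_mono k : (k < N)%N -> tk k <= tk k.+1.
Proof.
move=> kN; rewrite leNgt; apply/negP => lt.
have H : forall s, 0 <= s -> Ind k.+1 s <= Ind k s.
  move=> s _; rewrite /Ind; case: ifP => h; case: ifP => h2 //.
  by move: h2; rewrite (le_trans h (ltW lt)).
have := J_le pp pm (good_Ind k.+1) (good_Ind k) H.
by rewrite !J_Ind ?(ltnW kN) // ler_pM2r ?invr_gt0 ?ltr0Sn // ler_nat ltnn.
Qed.

Lemma tk_ge0 k : (k <= N)%N -> 0 <= tk k.
Proof. by move=> kN; case: (tk_ok kN). Qed.

Definition lo (s : R) := \sum_(k < N) gf th (tk k.+1) * (Ind k.+1 s - Ind k s).

Definition up (s : R) := ln 2 * Ind 0 s
  + \sum_(k < N) gf th (tk k) * (Ind k.+1 s - Ind k s)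
  + gf th (tk N) * (1 - Ind N s).

Lemma lo_le s : lo s <= gf th s.
Proof.
have H : forall n, (n <= N)%N ->
    \sum_(k < n) gf th (tk k.+1) * (Ind k.+1 s - Ind k s)
    <= gf th s * (Ind n s - Ind 0 s).
  elim => [|n IH] nN; first by rewrite big_ord0 subrr mulr0.
  rewrite big_ord_recr /=.
  have -> : Ind n.+1 s - Ind 0 s = (Ind n s - Ind 0 s) + (Ind n.+1 s - Ind n s).
    by ring.
  rewrite [gf th s * _]mulrDr; apply: lerD; first exact: IH (ltnW nN).
  have mono := tk_mono nN.
  rewrite /Ind; case: (leP s (tk n)) => h1.
    by rewrite (le_trans h1 mono) subrr !mulr0.
  case: (leP s (tk n.+1)) => h2; last by rewrite subrr !mulr0.
  rewrite subr0 !mulr1; exact: gf_anti.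
apply: le_trans (H N (leqnn N)) _.
rewrite ler_piMr ?gf_ge0 //.
rewrite /Ind; case: ifP; case: ifP => _ _; rewrite ?subrr ?subr0 ?sub0r //.
Qed.

Lemma up_ge s : 0 <= s -> gf th s <= up s.
Proof.
move=> s0.
have H : forall n, (n <= N)%N ->
    gf th s * Ind n s <=
    ln 2 * Ind 0 s + \sum_(k < n) gf th (tk k) * (Ind k.+1 s - Ind k s).
  elim => [|n IH] nN.
    rewrite big_ord0 addr0; apply: ler_wpM2r; last exact: gf_le_ln2.
    by rewrite /Ind; case: ifP.
  rewrite big_ord_recr /= addrA.
  have -> : gf th s * Ind n.+1 s =
      gf th s * Ind n s + gf th s * (Ind n.+1 s - Ind n s).
    by ring.
  apply: lerD; first exact: IH (ltnW nN).
  have mono := tk_mono nN.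
  rewrite /Ind; case: (leP s (tk n)) => h1.
    by rewrite (le_trans h1 mono) subrr !mulr0.
  case: (leP s (tk n.+1)) => h2; last by rewrite subrr !mulr0.
  rewrite subr0 !mulr1; apply: gf_anti => //; exact: ltW.
rewrite /up.
have -> : gf th s = gf th s * Ind N s + gf th s * (1 - Ind N s).
  by ring.
apply: lerD; first exact: H.
rewrite /Ind; case: ifP => h; first by rewrite subrr !mulr0.
rewrite subr0 !mulr1; apply: gf_anti => //.
by apply: ltW; rewrite ltNge h.
Qed.

Lemma good_lo : good lo.
Proof.
apply: (@good_sum _ _ (fun k s => gf th (tk k.+1) * (Ind k.+1 s - Ind k s))) => k; apply: good_scale; apply: good_sub; exact: good_Ind.
Qed.

Lemma good_up : good up.
Proof.
apply: good_add; last by apply: good_scale; apply: good_sub;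
  [exact: good_cst | exact: good_Ind].
apply: good_add; first by apply: good_scale; exact: good_Ind.
apply: (@good_sum _ _ (fun k s => gf th (tk k) * (Ind k.+1 s - Ind k s))) => k; apply: good_scale; apply: good_sub; exact: good_Ind.
Qed.

Lemma diff_step k : (k.+1%:R / N.+1%:R - k%:R / N.+1%:R : R) = N.+1%:R^-1.
Proof.
by rewrite -mulrBl (_ : k.+1%:R - k%:R = 1) ?mul1r // -addn1 natrD addrAC subrr add0r.
Qed.

Lemma J_lo : J qp qm lo = (\sum_(k < N) gf th (tk k.+1)) / N.+1%:R.
Proof.
rewrite /lo (@J_sum _ qp qm pp pm _ (fun k s => gf th (tk k.+1) * (Ind k.+1 s - Ind k s))) //; last first.
  by move=> k; apply: good_scale; apply: good_sub; exact: good_Ind.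
rewrite mulr_suml; apply: eq_bigr => k _.
rewrite J_scale //; last by apply: good_sub; exact: good_Ind.
rewrite J_sub ?J_Ind //; try exact: good_Ind.
- by rewrite diff_step.
- exact: ltnW.
Qed.

Lemma J_up : J qp qm up = (\sum_(k < N.+1) gf th (tk k)) / N.+1%:R.
Proof.
rewrite /up J_add //; last first.
  by apply: good_scale; apply: good_sub; [exact: good_cst | exact: good_Ind].
  apply: good_add; first by apply: good_scale; exact: good_Ind.
  apply: (@good_sum _ _ (fun k s => gf th (tk k) * (Ind k.+1 s - Ind k s))) => k; apply: good_scale; apply: good_sub; exact: good_Ind.
rewrite J_add //; last first.
  apply: (@good_sum _ _ (fun k s => gf th (tk k) * (Ind k.+1 s - Ind k s))) => k; apply: good_scale; apply: good_sub; exact: good_Ind.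
  by apply: good_scale; exact: good_Ind.
rewrite J_scale ?J_Ind //; last exact: good_Ind.
rewrite (@J_sum _ qp qm pp pm _ (fun k s => gf th (tk k) * (Ind k.+1 s - Ind k s))) //; last first.
  by move=> k; apply: good_scale; apply: good_sub; exact: good_Ind.
rewrite J_scale //; last by apply: good_sub; [exact: good_cst|exact: good_Ind].
rewrite J_sub ?J_one ?J_Ind //; [|exact: good_cst|exact: good_Ind].
rewrite mul0r mulr0 add0r big_ord_recr /= mulrDl mulr_suml.
congr (_ + _).
  apply: eq_bigr => k _; rewrite J_scale //; last by apply: good_sub; exact: good_Ind.
  rewrite J_sub ?J_Ind //; try exact: good_Ind; last exact: ltnW.
  by rewrite diff_step.
congr (_ * _).
rewrite -{1}(@divff _ N.+1%:R) ?pnatr_eq0 // -mulrBl.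
by rewrite (_ : N.+1%:R - N%:R = 1) ?mul1r // -addn1 natrD addrAC subrr add0r.
Qed.

Lemma core_bounds :
  (\sum_(k < N) gf th (tk k.+1)) / N.+1%:R <= J qp qm (gf th) /\
  J qp qm (gf th) <= (ln 2 + \sum_(k < N) gf th (tk k.+1)) / N.+1%:R.
Proof.
split.
  rewrite -J_lo; apply: J_le => //; [exact: good_lo | exact: good_gf |].
  by move=> s _; exact: lo_le.
apply: (@le_trans _ _ (J qp qm up)).
  apply: J_le => //; [exact: good_gf | exact: good_up | exact: up_ge].
rewrite J_up; apply: ler_wpM2r; first by rewrite invr_ge0.
rewrite big_ord_recl /=; apply: lerD; first exact: gf_le_ln2 (tk_ge0 _).
by rewrite le_eqVlt; apply/orP; left; apply/eqP; apply: eq_bigr => k _.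
Qed.

End Core.

Section Disc.
Variable R : realType.

Lemma ln_prod (I : Type) (r : seq I) (F : I -> R) :
  (forall i, 0 < F i) -> ln (\prod_(i <- r) F i) = \sum_(i <- r) ln (F i).
Proof.
move=> F0; elim: r => [|a r IH]; first by rewrite !big_nil ln1.
rewrite !big_cons lnM ?IH // posrE //; exact: prodr_gt0.
Qed.

Lemma sum_bool_term (th w tt : R) :
  \sum_(b : bool) expR (th * (w * (if sgn tt * Defs.sval R b < 0 then 1 else 0)))
  = 1 + expR (th * w).
Proof.
rewrite big_bool /sgn /Defs.sval; case: (0 <= tt) => /=.
  rewrite ?mul1r ?mulr1 ?mulN1r ?opprK ?ltr10 ?ltrN10 /= ?mulr0 ?mulr1 ?expR0.
  by rewrite addrC.
by rewrite ?mul1r ?mulr1 ?mulN1r ?opprK ?ltr10 ?ltrN10 /= ?mulr0 ?mulr1 ?expR0 addrC.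
Qed.

Lemma condMGF_eq (Psiinv : R -> R) (th : R) (N : nat) (t : 'I_N -> R) :
  (0 < N)%N ->
  N%:R^-1 * ln (condMGF Psiinv th t) =
  N%:R^-1 * \sum_(i < N) gf th (Psiinv ((rank t i)%:R / N.+1%:R)) - ln 2.
Proof.
move=> N0.
have N0' : (N%:R : R) != 0 by rewrite pnatr_eq0 -lt0n.
set w := fun i : 'I_N => Psiinv ((rank t i)%:R / N.+1%:R).
set c := fun (i : 'I_N) (b : bool) =>
  (if sgn (t i) * Defs.sval R b < 0 then (1:R) else 0).
have E1 : forall x : {ffun 'I_N -> bool},
    expR (N%:R * th * Dmetric Psiinv t x) =
    \prod_(i < N) expR (th * (w i * c i (x i))).
  move=> x; rewrite -expR_sum /Dmetric; congr expR.
  transitivity (th * \sum_(i < N) (w i * c i (x i))); last by rewrite mulr_sumr.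
  by field.
rewrite /condMGF (eq_bigr _ (fun x _ => E1 x)).
rewrite -(bigA_distr_bigA (fun i b => expR (th * (w i * c i b)))).
have E2 : forall i : 'I_N, \sum_(b : bool) expR (th * (w i * c i b)) = 1 + expR (th * w i).
  move=> i; exact: sum_bool_term.
rewrite (eq_bigr _ (fun i _ => E2 i)).
have E3 : (2 ^+ N)^-1 * \prod_(i < N) (1 + expR (th * w i)) =
    \prod_(i < N) ((1 + expR (th * w i)) / 2).
  rewrite big_split /= prodr_const card_ord exprVn mulrC //.
rewrite E3 ln_prod; last first.
  by move=> i; rewrite divr_gt0 // addr_gt0 // expR_gt0.
have E4 : forall i : 'I_N, ln ((1 + expR (th * w i)) / 2) = gf th (w i) - ln 2.
  move=> i; rewrite lnM ?posrE ?invr_gt0 ?addr_gt0 ?expR_gt0 // lnV ?posrE //.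
rewrite (eq_bigr _ (fun i _ => E4 i)) sumrB sumr_const card_ord.
rewrite mulrBr; congr (_ - _).
by rewrite -(mulr_natr (ln 2)) mulrCA mulVf // mulr1.
Qed.

End Disc.

Section Rank.
Variable R : realType.
Variable N : nat.
Variable t : 'I_N -> R.

Lemma rank_lt (i j : 'I_N) :
  (`|t i| < `|t j|) || ((`|t i| == `|t j|) && (i < j)%N) -> (rank t i < rank t j)%N.
Proof.
move=> h; rewrite /rank; apply: proper_card; apply/properP; split.
  apply/fintype.subsetP => k; rewrite !inE => /orP [lt|/andP[/eqP e ki]].
    case/orP: h => [hij | /andP[/eqP eij ij]]; apply/orP; left.
      exact: lt_trans hij.
    by rewrite -eij.
  case/orP: h => [hij | /andP[/eqP eij ij]].
    by apply/orP; left; rewrite e.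
  apply/orP; right; rewrite e eij eqxx /=.
  exact: leq_trans ki (ltnW ij).
exists j; first by rewrite !inE; apply/orP; right; rewrite eqxx leqnn.
apply/negP; rewrite !inE => /orP [hji|/andP [/eqP eji ji]].
  case/orP: h => [hij | /andP[/eqP eij ij]].
    by move: hji; rewrite lt_gtF.
  by move: hji; rewrite eij ltxx.
case/orP: h => [hij | /andP[/eqP eij ij]].
  by move: hij; rewrite eji ltxx.
by move: ji; rewrite leqNgt ij.
Qed.

Lemma rank_inj : injective (rank t).
Proof.
move=> i j e; apply/eqP; apply: contraT => neq.
case: (ltgtP `|t i| `|t j|) => h.
- have := @rank_lt i j; rewrite h /= e ltnn; by apply.
- have := @rank_lt j i; rewrite h /= e ltnn; by apply.
- case: (ltngtP i j) => ij.
  + have := @rank_lt i j; rewrite h eqxx ij orbT e ltnn; by apply.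
  + have := @rank_lt j i; rewrite h eqxx ij orbT e ltnn; by apply.
  + by move: neq; rewrite (val_inj ij) eqxx.
Qed.

Lemma rank_gt0 i : (0 < rank t i)%N.
Proof. by apply/card_gt0P; exists i; rewrite !inE; apply/orP; right; rewrite eqxx leqnn. Qed.

Lemma rank_leN i : (rank t i <= N)%N.
Proof. by rewrite -[X in (_ <= X)%N](card_ord N); exact: max_card. Qed.

Lemma rk_lt i : ((rank t i).-1 < N)%N.
Proof. have := rank_gt0 i; have := rank_leN i; lia. Qed.

Lemma rank_sum (F : nat -> R) :
  \sum_(i < N) F (rank t i) = \sum_(k < N) F k.+1.
Proof.
pose sg (i : 'I_N) : 'I_N := Ordinal (rk_lt i).
have sgi : injective sg.
  move=> i j /(congr1 val) /= e; apply: rank_inj.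
  have := rank_gt0 i; have := rank_gt0 j; lia.
rewrite [RHS](reindex_inj sgi) /=; apply: eq_bigr => i _.
by rewrite prednK // rank_gt0.
Qed.

End Rank.

Unset Implicit Arguments. Set Strict Implicit.

Lemma final_ineq (R : realType) (n S L l : R) : 0 < n -> 0 <= S <= n * l ->
  S / (n + 1) <= L <= (l + S) / (n + 1) ->
  `|L - n^-1 * S| <= l / (n + 1).
Proof.
move=> n0 /andP[S0 Sn] /andP[L1 L2].
have n1 : 0 < n + 1 by lra.
set c := (n + 1)^-1 in L1 L2 *.
set d := n^-1.
have c0 : 0 < c by rewrite invr_gt0.
have d0 : 0 < d by rewrite invr_gt0.
have cn : c * (n + 1) = 1 by rewrite mulVf // gt_eqF.
have dn : d * n = 1 by rewrite mulVf // gt_eqF.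
have cd : c <= d by rewrite lef_pV2 ?posrE // lerDl.
have Sd : S * d <= l.
  by rewrite -(ler_pM2r n0) -mulrA [d * n]dn mulr1 mulrC.
have dc : d - c = d * c.
  rewrite /d /c; field; apply/andP; split; rewrite gt_eqF //.
rewrite ler_norml; apply/andP; split.
- have h2 : S * d * c <= l * c by rewrite ler_pM2r.
  have h3 : S * (d - c) = S * d * c by rewrite dc mulrA.
  nra.
- have h3 : S * c <= S * d by rewrite ler_wpM2l.
  nra.
Qed.

Theorem lemma3 (R : realType) (qp qm : R -> R) (Psiinv : R -> R)
  (d : measure_display) (Omega : measurableType d) (P : probability Omega R)
  (Xs : nat -> Omega -> bool) (Ys : nat -> Omega -> R) (theta : R) :
  (* q^+ and q^- are probability densities *)
  is_pdf qp -> is_pdf qm ->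
  (* (A1) *)
  (exists (M1 a : R) (S1 : {poly R}), 0 < M1 /\ 0 < a /\
     forall y, M1 < `|y| -> qp y < S1.[`|y|] * expR (- (a * `|y|)) /\
                            qm y < S1.[`|y|] * expR (- (a * `|y|))) ->
  (* (A2) *)
  (exists (M2 : R) (S2 : {poly R}), 0 < M2 /\
     forall y, M2 < `|y| -> `|llr qp qm y| < S2.[`|y|]) ->
  (* (A3): T is a.s. finite, i.e. q^+ and q^- vanish simultaneously (a.e.) *)
  {ae @lebesgue_measure R, forall y, (qp y == 0) = (qm y == 0)} ->
  (* (A3): Psiinv is the inverse of the CDF Psi of |T| on [0,oo) *)
  (forall t, 0 <= t -> Psiinv (PsiCDF qp qm t) = t) ->
  (forall u, 0 <= u < 1 -> 0 <= Psiinv u /\ PsiCDF qp qm (Psiinv u) = u) ->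
  (* (A3): smoothness, first three derivatives exist *)
  (forall (n : nat) (t : R), (n < 3)%N -> 0 < t ->
     derivable (derive1n n (PsiCDF qp qm)) t 1) ->
  (forall (n : nat) (u : R), (n < 3)%N -> 0 < u < 1 ->
     derivable (derive1n n Psiinv) u 1) ->
  (* random variables X_i(1), Y_i are measurable *)
  (forall i b, measurable [set w | Xs i w = b]) ->
  (forall i, measurable_fun setT (Ys i)) ->
  (* (X_i(1), Y_i)_{i>=1} are i.i.d.: X_i uniform on {+-1}, Y_i | X_i has density q^{X_i} *)
  (forall (I : seq nat) (s : nat -> bool) (B : nat -> set R),
     uniq I -> (forall i, measurable (B i)) ->
     P (\bigcap_(i in [set` I]) [set w | Xs i w = s i /\ Ys i w \in B i])
     = (\prod_(i <- I)
          ((2%:R^-1)%:E * \int[lebesgue_measure]_(y in B i) (qof qp qm (s i) y)%:E))%E) ->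
  theta < 0 ->
  {ae P, forall w,
     (fun N : nat => N%:R^-1 *
        ln (condMGF Psiinv theta (fun i : 'I_N => llr qp qm (Ys i.+1 w))))
     @ \oo -->
     (fine (\int[lebesgue_measure]_(y in setT)
              (ln (1 + expR (theta * `|llr qp qm y|)) * ((qp y + qm y) / 2))%:E)
      - ln 2)}.
Proof.
move=> pp pm _ _ _ _ Hinv _ _ _ _ _ th0.
apply: aeW => w.
set L := fine _.
have LJ : L = J qp qm (gf theta) by [].
pose S := fun N : nat => \sum_(k < N) gf theta (tk Psiinv N k.+1).
have Hb : forall N : nat, S N / N.+1%:R <= L <= (ln 2 + S N) / N.+1%:R.
  move=> N; rewrite LJ; have [h1 h2] := core_bounds pp pm Hinv (ltW th0) N.
  by rewrite h1 h2.
have HS : forall N : nat, 0 <= S N <= N%:R * ln 2.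
  move=> N; apply/andP; split; first by apply: sumr_ge0 => k _; exact: gf_ge0.
  apply: le_trans (_ : \sum_(k < N) ln 2 <= _).
    apply: ler_sum => k _; apply: gf_le_ln2; first exact: ltW.
    by apply: (tk_ge0 Hinv); exact: ltn_ord.
  by rewrite sumr_const card_ord mulr_natl.
have Heq : forall N : nat, (0 < N)%N ->
    N%:R^-1 * ln (condMGF Psiinv theta (fun i : 'I_N => llr qp qm (Ys i.+1 w)))
    = N%:R^-1 * S N - ln 2.
  move=> N N0; rewrite condMGF_eq //; congr (_ * _ - _).
  exact: (rank_sum _ (fun k => gf theta (Psiinv (k%:R / N.+1%:R)))).
apply/cvgrPdist_le => e e0.
exists (Num.truncn (ln 2 / e)).+1 => // N /= KN.
have N0 : (0 < N)%N by apply: leq_trans KN.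
rewrite Heq // opprB addrA subrK.
have n0 : (0 : R) < N%:R by rewrite ltr0n.
apply: le_trans (@final_ineq _ N%:R (S N) L (ln 2) n0 (HS N) _) _.
  by have := Hb N; rewrite -natr1; apply.
rewrite -natr1 ler_pdivrMr ?ltr_wpDr //.
have := truncnS_gt (ln 2 / e).
rewrite ltr_pdivrMr // => h.
apply: ltW; apply: lt_le_trans h _.
rewrite mulrC ler_wpM2l ?(ltW e0) //.
apply: le_trans (_ : N%:R <= _); first by rewrite ler_nat.
by rewrite lerDl.
Qed.
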